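(* Let $E=[n]$, let $f:2^E\to\mathbb{Z}_{\ge 0}$ be a nonnegative integer-valued submodular function with $M:=\|f\|_\infty=\max_{S\subseteq E}|f(S)|<\infty$, let $F$ be its Lovász extension, and let $d\in\mathbb{Z}^n$ be a nonzero vector. For $R>0$ define \[ \Phi(x)=F(x)+g_R(x),\qquad g_R(x):=R\,|1-d^\top x|,\qquad x\in\mathbb{R}^n. \] If $R>M$, then every minimizer $x^\star$ of $\Phi$ over $\mathbb{R}^n$ satisfies $d^\top x^\star=1$. In particular, for such $R$ the constrained problem $\min\{F(x): x\in\mathbb{R}^n,\ d^\top x=1\}$ is equivalent to the unconstrained problem $\min_{x\in\mathbb{R}^n}\Phi(x)$.
   Context: For $x\in\mathbb{R}^n$ and $S\subseteq E$ write $x(S)=\sum_{i\in S}x_i$. The base polytope of $f$ is $B(f)=\{x\in\mathbb{R}^n: x(S)\le f(S)\ \forall S\subseteq E,\ x(E)=f(E)\}$. The Lovász extension of $f$ is $F(x)=\max_{v\in B(f)}v^\top x$; equivalently $F(x)=\sum_{i=1}^n x_{\pi_i}(f(S_i)-f(S_{i-1}))$, where $\pi$ is a permutation with $x_{\pi_1}\ge\cdots\ge x_{\pi_n}$ (ties broken lexicographically), $S_i=\{\pi_1,\dots,\pi_i\}$ and $S_0=\emptyset$. *)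

(* Defs.v *)
From HB Require Import structures.
From mathcomp Require Import all_boot all_order all_algebra.
From mathcomp Require Import reals.
Set Implicit Arguments. Unset Strict Implicit. Unset Printing Implicit Defensive.
Import Order.TTheory GRing.Theory Num.Theory.
Local Open Scope ring_scope.

Definition submodular (n : nat) (f : {set 'I_n} -> nat) : Prop :=
  forall A B : {set 'I_n}, (f (A :|: B) + f (A :&: B) <= f A + f B)%N.

(* Permutation sorting x in non-increasing order, ties broken
   lexicographically (sort is stable, enum 'I_n is increasing). *)
Definition lovasz_perm (R : realType) (n : nat) (x : 'I_n -> R) : seq 'I_n :=
  sort (fun i j => x j <= x i) (enum 'I_n).

Definition lovasz_prefix (R : realType) (n : nat) (x : 'I_n -> R) (k : nat)
  : {set 'I_n} := [set i in take k (lovasz_perm x)].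

Definition lovasz_ext (R : realType) (n : nat) (f : {set 'I_n} -> nat)
  (x : 'I_n -> R) : R :=
  \sum_(k < n)
    x (nth k (lovasz_perm x) k) *
    ((f (lovasz_prefix x k.+1))%:R - (f (lovasz_prefix x k))%:R).

Definition dotz (R : realType) (n : nat) (d : 'I_n -> int) (x : 'I_n -> R) : R :=
  \sum_(i < n) (d i)%:~R * x i.

Definition Phi (R : realType) (n : nat) (f : {set 'I_n} -> nat) (d : 'I_n -> int)
  (r : R) (x : 'I_n -> R) : R :=
  lovasz_ext f x + r * `|1 - dotz d x|.

Definition supnorm (n : nat) (f : {set 'I_n} -> nat) : nat :=
  (\max_(S : {set 'I_n}) f S)%N.

(* Main.v *)
Require Import Defs.
From HB Require Import structures.
From mathcomp Require Import all_boot all_order all_algebra.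
From mathcomp Require Import reals.
From mathcomp Require Import lra.
Import Order.TTheory GRing.Theory Num.Theory.
Local Open Scope ring_scope.

Section Aux.
Variable R : realType.

Lemma abel0 (w h : nat -> R) (n : nat) :
  h 0%N = 0 -> h n = 0 ->
  (forall k, (0 < k < n)%N -> w k.-1 != w k -> h k = 0) ->
  \sum_(k < n) w k * (h k.+1 - h k) = 0.
Proof.
move=> h0 hn hk.
suff H : forall m, (m <= n)%N ->
  \sum_(k < m) w k * (h k.+1 - h k) = if m is m'.+1 then w m' * h m else 0.
  by rewrite H //; case: n hn {hk H} => [|n'] hn //; rewrite hn mulr0.
elim=> [|m IH] Hm; first by rewrite big_ord0.
rewrite big_ord_recr /= IH ?(ltnW Hm) //.
case: m IH Hm => [|m] IH Hm; first by rewrite h0 subr0 add0r.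
have [e|ne] := eqVneq (w m) (w m.+1).
  by rewrite e mulrBr addrCA subrr addr0.
by rewrite (hk m.+1) //= ?mulr0 ?add0r ?sub0r ?mulrN ?subr0.
Qed.


Variable n : nat.

Lemma sum_perm_nth (s : seq 'I_n) (G : 'I_n -> R) :
  perm_eq s (enum 'I_n) -> \sum_(k < n) G (nth k s k) = \sum_j G j.
Proof.
move=> Hs.
have Hsz : size s = n by rewrite (perm_size Hs) size_enum_ord.
have -> : \sum_j G j = \sum_(j <- s) G j.
  by rewrite (perm_big _ Hs) big_enum.
case: n s G Hs Hsz => [|m] s G Hs Hsz.
  by rewrite big_ord0; case: s Hsz {Hs} => // _; rewrite big_nil.
rewrite [RHS](big_nth ord0) Hsz big_mkord; apply: eq_bigr => k _.
by rewrite (set_nth_default ord0) // Hsz.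
Qed.

Variable f : {set 'I_n} -> nat.

Definition Lg (s : seq 'I_n) (x : 'I_n -> R) : R :=
  \sum_(k < n) x (nth k s k) *
    ((f [set i in take k.+1 s])%:R - (f [set i in take k s])%:R).

Lemma lovasz_LgE x : lovasz_ext f x = Lg (lovasz_perm x) x.
Proof. by []. Qed.

Lemma Lg_lip (s : seq 'I_n) (x y : 'I_n -> R) :
  perm_eq s (enum 'I_n) ->
  `|Lg s y - Lg s x| <= (supnorm f)%:R * \sum_j `|y j - x j|.
Proof.
move=> Hs.
rewrite /Lg -sumrB -(@sum_perm_nth s (fun j => `|y j - x j|) Hs) mulr_sumr.
apply: le_trans (ler_norm_sum _ _ _) _.
apply: ler_sum => k _.
rewrite -mulrBl normrM mulrC ler_wpM2r //.
have Hb : forall S, (f S <= supnorm f)%N by move=> S; exact: leq_bigmax.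
have h1 := Hb [set i in take k.+1 s]; have h2 := Hb [set i in take k s].
move: h1 h2; rewrite -!(ler_nat R) => h1 h2.
have g1 : (0:R) <= (f [set i in take k.+1 s])%:R by [].
have g2 : (0:R) <= (f [set i in take k s])%:R by [].
rewrite ler_norml; apply/andP; split; lra.
Qed.

Definition geR : rel R := fun a b => b <= a.
Lemma geR_trans : transitive geR.
Proof. by move=> b a c h1 h2; rewrite /geR (le_trans h2 h1). Qed.
Lemma geR_refl : reflexive geR.
Proof. by move=> a; rewrite /geR lexx. Qed.

Lemma sorted_mapx (x : 'I_n -> R) (s : seq 'I_n) :
  sorted (fun i j => x j <= x i) s -> sorted geR (map x s).
Proof. by rewrite sorted_map. Qed.

Lemma prefix_level (x : 'I_n -> R) (s : seq 'I_n) (k : nat) :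
  perm_eq s (enum 'I_n) -> sorted (fun i j => x j <= x i) s ->
  (0 < k < n)%N -> (map x s)`_k < (map x s)`_k.-1 ->
  [set i in take k s] = [set j | (map x s)`_k < x j].
Proof.
move=> Hs Hso /andP[k0 kn] Hlt.
have Hsz : size s = n by rewrite (perm_size Hs) size_enum_ord.
have Hw := sorted_leq_nth geR_trans geR_refl 0 (@sorted_mapx x s Hso).
apply/setP => j; rewrite !inE.
have js : j \in s by rewrite (perm_mem Hs) mem_enum.
rewrite in_take //.
have xj : x j = (map x s)`_(index j s) by rewrite (nth_map j) ?index_mem // nth_index.
have ij : (index j s < n)%N by move: js; rewrite -index_mem Hsz.
case: ltnP => Hi.
  apply/esym; apply: lt_le_trans Hlt _; rewrite xj.
  have := Hw (index j s) k.-1; rewrite /geR; apply; rewrite ?inE ?size_map ?Hsz //.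
    by rewrite (leq_ltn_trans (leq_pred k)).
  by rewrite -ltnS prednK.
apply/esym/negbTE; rewrite -leNgt xj.
by have := Hw k (index j s); rewrite /geR; apply; rewrite ?inE ?size_map ?Hsz.
Qed.

Lemma geR_anti : antisymmetric geR.
Proof. by move=> a b /andP[h1 h2]; apply: le_anti; rewrite /geR in h1 h2; rewrite h1 h2. Qed.

Lemma Lg_sorted_eq (x : 'I_n -> R) (s1 s2 : seq 'I_n) :
  perm_eq s1 (enum 'I_n) -> perm_eq s2 (enum 'I_n) ->
  sorted (fun i j => x j <= x i) s1 -> sorted (fun i j => x j <= x i) s2 ->
  Lg s1 x = Lg s2 x.
Proof.
move=> H1 H2 So1 So2.
have Hw : map x s1 = map x s2.
  apply: (sorted_eq geR_trans geR_anti (@sorted_mapx x s1 So1) (@sorted_mapx x s2 So2)).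
  by apply: perm_map; rewrite (perm_trans H1) // perm_sym.
have Sz1 : size s1 = n by rewrite (perm_size H1) size_enum_ord.
have Sz2 : size s2 = n by rewrite (perm_size H2) size_enum_ord.
set w := map x s1.
pose h k := (f [set i in take k s1])%:R - (f [set i in take k s2])%:R : R.
apply/eqP; rewrite -subr_eq0; apply/eqP.
rewrite /Lg -sumrB.
transitivity (\sum_(k<n) w`_k * (h k.+1 - h k)).
  apply: eq_bigr => k _.
  have e1 : x (nth k s1 k) = w`_k by rewrite (nth_map k) // Sz1.
  have e2 : x (nth k s2 k) = w`_k by rewrite /w Hw (nth_map k) // Sz2.
  rewrite e1 e2 /h; lra.
apply: abel0.
- by rewrite /h !take0 subrr.
- rewrite /h !take_oversize ?Sz1 ?Sz2 //.
  have -> : [set i in s1] = [set i in s2].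
    by apply/setP => i; rewrite !inE (perm_mem H1) (perm_mem H2).
  by rewrite subrr.
move=> k Hk Hne.
have Hlt : w`_k < w`_k.-1.
  rewrite lt_neqAle eq_sym Hne /=.
  have := sorted_leq_nth geR_trans geR_refl 0 (@sorted_mapx x s1 So1) k.-1 k.
  rewrite /geR; apply; rewrite ?inE ?size_map ?Sz1.
  - by case/andP: Hk => k0 kn; rewrite (leq_ltn_trans (leq_pred k)).
  - by case/andP: Hk.
  - exact: leq_pred.
rewrite /h (@prefix_level x s1 k H1 So1 Hk Hlt).
rewrite /w Hw in Hlt.
by rewrite (@prefix_level x s2 k H2 So2 Hk Hlt) Hw subrr.
Qed.

Lemma gap_exists (x : 'I_n -> R) :
  exists2 e, 0 < e & forall a b, x a < x b -> e <= x b - x a.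
Proof.
exists (\big[Order.min/1]_(p : 'I_n * 'I_n)
          (if x p.1 < x p.2 then x p.2 - x p.1 else 1)).
  apply: (big_ind (fun v => 0 < v)) => //.
    by move=> u v hu hv; rewrite lt_min hu hv.
  by move=> p _; case: ifP => // h; rewrite subr_gt0.
move=> a b hab.
apply: le_trans (bigmin_le _ (a, b) _) _ => /=.
by rewrite hab.
Qed.

Lemma perturb (x : 'I_n -> R) (i : 'I_n) (dl e : R) :
  (forall a b, x a < x b -> e <= x b - x a) -> `|dl| < e ->
  lovasz_ext f (fun j => x j + (if j == i then dl else 0))
    <= lovasz_ext f x + (supnorm f)%:R * `|dl|.
Proof.
move=> Hgap Hdl.
set y := fun j => x j + (if j == i then dl else 0).
have nd1 := ler_norm dl.
have nd2 : - dl <= `|dl| by rewrite -normrN ler_norm.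
have Hp : forall z : 'I_n -> R, perm_eq (lovasz_perm z) (enum 'I_n).
  by move=> z; rewrite /lovasz_perm perm_sort.
have Hso : forall z : 'I_n -> R, sorted (fun i j => z j <= z i) (lovasz_perm z).
  by move=> z; apply: sort_sorted => a b; exact: le_total.
have Sox : sorted (fun i j => x j <= x i) (lovasz_perm y).
  apply: sub_sorted (Hso y) => a b /= hy.
  rewrite leNgt; apply/negP => hlt.
  have := Hgap a b hlt; move: hy; rewrite /y.
  case: (a == i); case: (b == i); lra.
rewrite !lovasz_LgE (@Lg_sorted_eq x (lovasz_perm x) (lovasz_perm y)) //.
have := @Lg_lip (lovasz_perm y) x y (Hp y).
have -> : \sum_j `|y j - x j| = `|dl|.
  rewrite (bigD1 i) //= big1 => [|j /negbTE hj]; rewrite /y ?eqxx ?hj addrAC subrr add0r.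
    by rewrite addr0.
  by rewrite normr0.
move=> h; have := le_trans (ler_norm _) h; lra.
Qed.

End Aux.

From mathcomp Require Import ring.

Theorem lemma2 (R : realType) (n : nat) (f : {set 'I_n} -> nat)
  (d : 'I_n -> int) (r : R) :
  submodular f ->
  (exists i, d i != 0) ->
  (supnorm f)%:R < r ->
  forall xs : 'I_n -> R,
    (forall y : 'I_n -> R, Phi f d r xs <= Phi f d r y) ->
    dotz d xs = 1 /\
    (forall y : 'I_n -> R, dotz d y = 1 -> lovasz_ext f xs <= lovasz_ext f y).
Proof.
move=> _ [i di0] Hr xs Hmin.
set M : R := (supnorm f)%:R.
have M0 : 0 <= M by [].
set t := dotz d xs.
have key : t = 1.
  case: (eqVneq t 1) => // ht; exfalso.
  set u := 1 - t.
  have a0 : 0 < `|u| by rewrite normr_gt0 subr_eq0 eq_sym.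
  have [e e0 He] := @gap_exists R n xs.
  set a := `|u|.
  set eta := e / (e + a).
  have ea0 : 0 < e + a by rewrite addr_gt0.
  have eta0 : 0 < eta by rewrite divr_gt0.
  have etaE : eta * (e + a) = e by rewrite /eta mulfVK // lt0r_neq0.
  have eta1 : eta <= 1 by rewrite /eta ler_pdivrMr // mul1r lerDl ltW.
  have etaa : eta * a < e.
    have h1 : eta * e + eta * a = e by rewrite -mulrDr.
    have h2 : 0 < eta * e by rewrite mulr_gt0.
    lra.
  set di := (d i)%:~R : R.
  have di1 : 1 <= `|di| by rewrite -intr_norm ler1z -gtz0_ge1 normr_gt0.
  have di0' : di != 0 by rewrite intr_eq0.
  set dl := eta * u / di.
  have dlE : di * dl = eta * u by rewrite /dl mulrC mulfVK.
  have ndl : `|dl| * `|di| = eta * a.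
    by rewrite -normrM mulrC dlE normrM (ger0_norm (ltW eta0)).
  have ndl0 : 0 <= `|dl| by [].
  have ndl2 : `|dl| <= eta * a by nra.
  have hdl : `|dl| < e by lra.
  have := @perturb R n f xs i dl e He hdl.
  set y := fun j => xs j + (if j == i then dl else 0).
  move=> Hp.
  have dy : dotz d y = t + eta * u.
    rewrite /dotz /y.
    under eq_bigr => j _ do rewrite mulrDr.
    rewrite big_split /= -/(dotz d xs) -/t -dlE.
    congr (_ + _).
    rewrite (bigD1 i) //= eqxx big1 => [|j /negbTE hj]; rewrite ?hj ?mulr0 ?addr0 //.
  have := Hmin y; rewrite /Phi dy -/t -/u.
  have -> : 1 - (t + eta * u) = (1 - eta) * u by rewrite /u; ring.
  rewrite normrM (ger0_norm (_ : 0 <= 1 - eta)); last by lra.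
  rewrite -/a.
  have h1 : M * `|dl| <= M * (eta * a) by rewrite ler_wpM2l.
  have h2 : M * (eta * a) < r * (eta * a) by rewrite ltr_pM2r // mulr_gt0.
  have h3 : r * ((1 - eta) * a) = r * a - r * (eta * a) by ring.
  rewrite h3; move: Hp; rewrite -/M; lra.
split => // y hy.
have := Hmin y; rewrite /Phi hy -/t key subrr normr0 !mulr0 !addr0 //.
Qed.
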